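(* Let $G$ be a finite group, let $\pi$ be a set of primes, let $q\in\pi$ and let $Q$ be a Sylow $q$-subgroup of $G$. Let $\mathcal{S}_{q'}(G_\pi)$ denote the union of all conjugacy classes $g^G$ with $g$ a $\pi$-element of $G$ such that $|g^G|$ is not divisible by $q$. If $\mathbf{Z}(Q)\le\mathbf{Z}(G)$ and $C_G(Q)$ has a normal Hall $\pi$-subgroup, then $|\mathbf{Z}(G)|_q=|\mathcal{S}_{q'}(G_\pi)|_q$.
   Context: A $\pi$-element is an element whose order is divisible only by primes in $\pi$. For a positive integer $n$ and prime $q$, $n_q$ denotes the largest power of $q$ dividing $n$. $|g^G|=|G:C_G(g)|$ is the size of the conjugacy class of $g$. *)

(* Defs.v *)
From mathcomp Require Import all_boot all_fingroup all_solvable.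
Set Implicit Arguments. Unset Strict Implicit. Unset Printing Implicit Defensive.
Local Open Scope group_scope.

Definition Sqp (gT : finGroupType) (G : {set gT}) (pi : nat_pred) (q : nat)
  : {set gT} :=
  \bigcup_(g in G | pi.-elt g && ~~ (q %| #|g ^: G|)%N) (g ^: G).

(* Main.v *)
Require Import Defs.
From mathcomp Require Import all_boot all_fingroup all_solvable.
Set Implicit Arguments. Unset Strict Implicit. Unset Printing Implicit Defensive.
Local Open Scope group_scope.

Lemma SqpP (gT : finGroupType) (G : {group gT}) pi q g :
  (g \in Sqp G pi q) = [&& g \in G, pi.-elt g & ~~ (q %| #|g ^: G|)%N].
Proof.
apply/bigcupP/and3P => [[x /andP[Gx /andP[px qx]] gx] | [Gg pg qg]]; last first.
  by exists g; rewrite ?Gg ?pg ?qg ?class_refl.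
have /class_eqP -> := gx; case/imsetP: gx => y Gy ->.
by rewrite groupJ // p_eltJ px qx.
Qed.

Section S.
Variables (gT : finGroupType) (G Q : {group gT}) (pi : nat_pred) (q : nat).
Local Notation S := (Sqp G pi q).

Lemma Sqp_X g n : g \in S -> g ^+ n \in S.
Proof.
rewrite !SqpP => /and3P[Gg pg qg]; rewrite groupX ?p_eltX //=.
apply: contra qg; rewrite -!index_cent1 => /dvdn_trans; apply.
apply: indexgS; apply/subsetP => y /subcent1P[Gy cyg].
by apply/subcent1P; split=> //; apply/commute_sym/commuteX/commute_sym.
Qed.

Lemma Sqp_M z x : q \in pi -> z \in 'Z(G) -> q.-elt z -> x \in S -> z * x \in S.
Proof.
move=> qpi /centerP[Gz cGz] qz; rewrite !SqpP => /and3P[Gx px qx].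
have pz : pi.-elt z by apply: sub_p_elt qz => p; rewrite inE => /eqP->.
have czx : commute z x := cGz x Gx.
rewrite groupM //= p_eltM //= -index_cent1.
have -> : 'C_G[z * x] = 'C_G[x] :> {set gT}.
  apply/setP => y; rewrite !in_setI !cent1E; case Gy: (y \in G) => //=.
  have cyz : commute y z by apply/commute_sym/cGz.
  by rewrite !mulgA cyz -!mulgA (inj_eq (mulgI z)).
by rewrite index_cent1.
Qed.

Lemma Sqp_q g : prime q -> Q \in 'Syl_q(G) -> 'Z(Q) \subset 'Z(G) -> g \in S -> g.`_q \in 'Z(Q).
Proof.
move=> qpr Qsyl sZ Sg; have sylQ : q.-Sylow(G) Q by move: Qsyl; rewrite inE.
have Sh : g.`_q \in S by apply: Sqp_X.
set h := g.`_q in Sh *.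
move: Sh; rewrite SqpP => /and3P[Gh ph qh].
set C := 'C_G[h].
have [R sylR] := Sylow_exists q C.
have sCG : C \subset G by apply: subsetIl.
have sylRG : q.-Sylow(G) R.
  case/and3P: sylR => sRC qR iR.
  rewrite /pHall (subset_trans sRC sCG) qR /= -(Lagrange_index sCG sRC) pnatM iR andbT.
  by rewrite /C index_cent1 p'natE.
have hR : h \in R.
  have: <[h]> \subset 'O_q(C).
    apply: pcore_max; first exact: p_elt_constt.
    apply: sub_center_normal; rewrite cycle_subG.
    apply/centerP; split; first by apply/subcent1P; split.
    by move=> y /subcent1P[_ c].
  by move/subset_trans/(_ (pcore_sub_Hall sylR)); rewrite cycle_subG.
have hZR : h \in 'Z(R).
  apply/centerP; split=> // y Ry.
  have : y \in C by apply: (subsetP (pHall_sub sylR)).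
  by case/subcent1P.
have [y Gy defR] := Sylow_trans sylQ sylRG.
move: hZR; rewrite defR /center centJ -conjIg -/('Z(Q)).
have /normP-> // : y \in 'N('Z(Q)).
apply: (subsetP (cent_sub _)); apply: (subsetP _ y Gy).
by rewrite centsC; apply: subset_trans sZ _; apply: subsetIr.
Qed.
End S.

Lemma card_split (gT : finGroupType) (G Z : {group gT}) (Y : {set gT}) (q : nat) :
  Y \subset G -> Z \subset 'C(G) -> q.-group Z ->
  (forall g, g \in Y -> g.`_q \in Z) -> (forall g, g \in Y -> g.`_q^' \in Y) ->
  (forall z x, z \in Z -> x \in Y -> z * x \in Y) ->
  #|Y| = (#|Z| * #|[set x in Y | q^'.-elt x]|)%N.
Proof.
move=> sYG cZG qZ Yq Yq' YM.
set X := [set x in Y | q^'.-elt x].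
have key z x : z \in Z -> x \in X -> (z * x).`_q = z.
  move=> Zz /setIdP[Yx qx].
  have czx : commute z x.
    by move: (subsetP cZG z Zz) => /centP; apply; apply: (subsetP sYG).
  by rewrite consttM // constt_p_elt ?(mem_p_elt qZ) // (constt1P qx) mulg1.
rewrite -cardsX -(card_in_imset (f := fun p => p.1 * p.2)).
  apply: eq_card => g; apply/idP/imsetP.
    move=> Yg; exists (g.`_q, g.`_q^'); last by rewrite /= consttC.
    by apply/setXP; split; [apply: Yq | apply/setIdP; split; [apply: Yq' | apply: p_elt_constt]].
  by case=> [[z x]] /setXP[Zz /setIdP[Yx _]] ->; apply: YM.
move=> [z x] [z' x'] /setXP[Zz Xx] /setXP[Zz' Xx'] /= eq.
have ez : z = z' by rewrite -(key z x) // -(key z' x') // eq.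
by move: eq; rewrite ez => /mulgI ->.
Qed.

Theorem proposition3p7 (gT : finGroupType) (G Q : {group gT})
  (pi : nat_pred) (q : nat) :
  prime q -> q \in pi -> Q \in 'Syl_q(G) ->
  'Z(Q) \subset 'Z(G) ->
  (exists H : {group gT}, pi.-Hall('C_G(Q)) H /\ H <| 'C_G(Q)) ->
  (#|'Z(G)|`_q = #|Sqp G pi q|`_q)%N.
Proof.
move=> qpr qpi Qsyl sZ [H [hallH nH]].
have sylQ : q.-Sylow(G) Q by move: Qsyl; rewrite inE.
have sQG := pHall_sub sylQ.
have qZ : q.-group 'Z(Q) := pgroupS (center_sub Q) (pHall_pgroup sylQ).
have cZG : 'Z(Q) \subset 'C(G) := subset_trans sZ (subsetIr _ _).
have qsub : {subset (q : nat_pred) <= pi} by move=> p; rewrite inE => /eqP->.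
set S := Sqp G pi q.
have sSG : S \subset G by apply/subsetP => g; rewrite SqpP => /andP[].
have Sq : forall g, g \in S -> g.`_q \in 'Z(Q) by move=> g; apply: Sqp_q.
have Sq' : forall g, g \in S -> g.`_q^' \in S by move=> g; apply: Sqp_X.
have SM : forall z x, z \in 'Z(Q) -> x \in S -> z * x \in S.
  move=> z x Zz Sx; apply: Sqp_M => //; first exact: (subsetP sZ).
  exact: mem_p_elt qZ Zz.
have eZG : (#|'Z(G)|`_q = #|'Z(Q)|)%N.
  have hZ := Hall_setI_normal (center_normal G) sylQ.
  have eQ : Q :&: 'Z(G) = 'Z(Q).
    apply/eqP; rewrite eqEsubset; apply/andP; split; last by rewrite subsetI center_sub sZ.
    apply/subsetP => x /setIP[Qx /centerP[Gx cx]]; apply/centerP; split => // y Qy.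
    by apply: cx; apply: (subsetP sQG).
  by rewrite -eQ (card_Hall hZ).
set XS := [set x in S | q^'.-elt x].
have cS : #|S| = (#|'Z(Q)| * #|XS|)%N by apply: card_split sSG cZG qZ Sq Sq' SM.
set Y := S :&: 'C(Q).
set XC := [set x in Y | q^'.-elt x].
have cY : #|Y| = (#|'Z(Q)| * #|XC|)%N.
  apply: (card_split (G := G)) cZG qZ _ _ _.
  - exact: subset_trans (subsetIl _ _) sSG.
  - by move=> g /setIP[/Sq].
  - move=> g /setIP[Sg Cg]; rewrite inE Sq' //=.
    by rewrite /constt groupX.
  - move=> z x Zz /setIP[Sx Cx]; rewrite inE SM //= groupM //.
    by move: Zz; rewrite inE => /andP[].
have eY : Y = H.
  apply/setP => g; rewrite inE SqpP.
  apply/idP/idP.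
    case/andP => /and3P[Gg pg _] Cg.
    by rewrite (mem_normal_Hall hallH nH) // inE Gg.
  move=> Hg; have /setIP[Gg Cg] := subsetP (pHall_sub hallH) g Hg.
  rewrite Gg Cg (mem_p_elt (pHall_pgroup hallH) Hg) /= andbT -index_cent1.
  rewrite -p'natE //; case/and3P: (sylQ) => _ _ iQ; apply: pnat_dvd iQ.
  by apply: indexgS; rewrite subsetI sQG sub_cent1.
have eH : (#|H|`_q = #|'Z(Q)|)%N.
  rewrite (card_Hall hallH) partn_part //.
  have nC : 'C_G(Q) <| 'N_G(Q) := subcent_normal G Q.
  have sylQN : q.-Sylow('N_G(Q)) Q.
    have sQN : Q \subset 'N_G(Q) by rewrite subsetI sQG normG.
    exact: pHall_subl sQN (subsetIl _ _) sylQ.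
  have hC := Hall_setI_normal nC sylQN.
  have eQ : Q :&: 'C_G(Q) = 'Z(Q) by rewrite setIA (setIidPl sQG).
  by rewrite -eQ (card_Hall hC).
have eX : #|XS| = #|XC| %[mod q].
  have -> : XC = 'Fix_(XS | 'J)(Q).
    rewrite afixJ; apply/setP => x; rewrite !inE.
    by rewrite andbAC.
  apply: pgroup_fix_mod (pHall_pgroup sylQ) _.
  apply/actsP => y Qy x /=; have Gy := subsetP sQG y Qy.
  by rewrite !inE !SqpP groupJr // p_eltJ classGidl // p_eltJ.
have XCpos : 0 < #|XC|.
  have: 0 < #|Y| by rewrite eY cardG_gt0.
  by rewrite cY muln_gt0 => /andP[_ ->].
have qXC : ~~ (q %| #|XC|).
  rewrite -p'natE // -partn_eq1 //.
  move: eH; rewrite -eY cY partnM ?cardG_gt0 // (part_pnat_id qZ).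
  by rewrite -{2}[#|'Z(Q)|]muln1 => /eqP; rewrite eqn_pmul2l ?cardG_gt0.
have qXS : ~~ (q %| #|XS|) by rewrite /dvdn eX.
have XSpos : 0 < #|XS| by case: #|XS| qXS => //; rewrite dvdn0.
rewrite eZG cS partnM ?cardG_gt0 // (part_pnat_id qZ) part_p'nat ?muln1 //.
by rewrite p'natE.
Qed.
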